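(* Let $E$ be a (real) topological vector space, let $\Omega$ be a nonempty open subset of $E$, and let $f_0,\dots,f_m:\Omega\to\mathbb{R}$ be functions. Let $\hat{x}$ be a solution of the problem $$(\mathcal{P}_1)\qquad \max f_0(x)\quad\text{subject to } x\in\Omega,\ f_i(x)\ge 0\ \text{for all } i\in\{1,\dots,m\}.$$ Assume: (a) for every $j\in\{i\in\{1,\dots,m\}: f_i(\hat{x})>0\}$, $f_j$ is lower semicontinuous at $\hat{x}$; (b) for every $i\in\{0,\dots,m\}$, $f_i$ is $D^-_M$-differentiable at $\hat{x}$. Then there exist $\lambda^0,\dots,\lambda^m\in\mathbb{R}_+$ such that: (i) $(\lambda^0,\dots,\lambda^m)\neq(0,\dots,0)$; (ii) $\lambda^i f_i(\hat{x})=0$ for all $i\in\{1,\dots,m\}$; (iii) $\sum_{i=0}^m \lambda^i D^-_M f_i(\hat{x})(u)\le 0$ for all $u\in E$. If, in addition, (c) there exists $w\in E$ such that $D^-_M f_i(\hat{x})(w)>0$ for every $i\in\{1,\dots,m\}$ with $f_i(\hat{x})=0$, then one can take $\lambda^0=1$.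
   Context: For a function $f$ defined on an open set containing $x$ and a direction $u\in E$, the lower Dini derivative is $D^-f(x)(u):=\liminf_{t\to0^+}\frac{f(x+tu)-f(x)}{t}$, with the convention $D^-f(x)(0)=0$. The modified lower Dini derivative is $D^-_Mf(x)(u):=\inf_{w\in E}\{D^-f(x)(u+w)-D^-f(x)(w)\}$. The function $f$ is called $D^-_M$-differentiable at $x$ if $D^-_Mf(x)(u)$ and $D^-f(x)(u)$ are finite for every $u\in E$. *)

(* Defs.v *)
From HB Require Import structures.
From mathcomp Require Import all_boot all_order all_algebra.
From mathcomp Require Import all_classical all_reals all_analysis.
Set Implicit Arguments. Unset Strict Implicit. Unset Printing Implicit Defensive.
Import Order.TTheory GRing.Theory Num.Theory.
Import numFieldNormedType.Exports.
Local Open Scope classical_set_scope.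
Local Open Scope ring_scope.

(* Lower Dini derivative D^-f(x)(u) = liminf_{t -> 0+} (f(x+tu)-f(x))/t,
   written as sup_{d>0} inf_{0<t<d} of the difference quotient, in \bar R. *)
Definition lower_dini (R : realType) (E : topologicalLmodType R)
    (f : E -> R) (x u : E) : \bar R :=
  ereal_sup [set ereal_inf [set ((f (x + t *: u) - f x) / t)%:E | t in `]0, d[ ]
            | d in `]0, +oo[ ].

Definition mod_lower_dini (R : realType) (E : topologicalLmodType R)
    (f : E -> R) (x u : E) : \bar R :=
  ereal_inf [set (lower_dini f x (u + w)%R - lower_dini f x w)%E | w in [set: E]].

Definition DM_differentiable (R : realType) (E : topologicalLmodType R)
    (f : E -> R) (x : E) : Prop :=
  forall u : E, mod_lower_dini f x u \is a fin_num /\ lower_dini f x u \is a fin_num.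

Definition lsc_at (R : realType) (E : topologicalLmodType R) (f : E -> R) (x : E) : Prop :=
  forall e : R, 0 < e -> \forall y \near x, f x - e < f y.

Definition solves_P1 (R : realType) (E : topologicalLmodType R) (m : nat)
    (Om : set E) (f0 : E -> R) (f : 'I_m -> E -> R) (xhat : E) : Prop :=
  [/\ Om xhat, (forall i, 0 <= f i xhat) &
      forall x, Om x -> (forall i, 0 <= f i x) -> f0 x <= f0 xhat].

(* Main.v *)
Require Import Defs.
From HB Require Import structures.
From mathcomp Require Import all_boot all_order all_algebra.
From mathcomp Require Import all_classical all_reals all_analysis.
From mathcomp Require Import ring lra.
Import Order.TTheory GRing.Theory Num.Theory.
Import numFieldNormedType.Exports.
Local Open Scope classical_set_scope.
Local Open Scope ring_scope.
Set Implicit Arguments.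
Section Gordan.
Variables (R : realType) (E : lmodType R).

Definition cvx (D : set E) := forall a b s, D a -> D b -> 0 < s < 1 ->
  D (s *: a + (1 - s) *: b).
Definition ccv (D : set E) (h : E -> R) := forall a b s, D a -> D b -> 0 < s < 1 ->
  s * h a + (1 - s) * h b <= h (s *: a + (1 - s) *: b).

Lemma key2 D h g : cvx D -> ccv D h -> ccv D g ->
  (forall u, D u -> h u <= 0 \/ g u <= 0) ->
  forall p q, D p -> D q -> 0 < h p -> 0 < g q -> g q * h p <= g p * h q.
Proof.
move=> cD ch cg H p q Dp Dq hp gq.
have gp : g p <= 0 by case: (H p Dp) => //; rewrite leNgt hp.
have hq : h q <= 0 by case: (H q Dq) => //; rewrite leNgt gq.
rewrite leNgt; apply/negP => lt.
pose N := h p - h q - g p + g q.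
have N0 : 0 < N by rewrite /N; lra.
pose s := (- h q + g q) / N.
have s0 : 0 < s by apply: divr_gt0 => //; lra.
have s1 : s < 1 by rewrite /s ltr_pdivrMr // mul1r /N; lra.
have e1 : 1 - s = (h p - g p) / N by rewrite /s /N; field; rewrite /N in N0; lra.
have Nn : N != 0 by rewrite gt_eqF.
have vpos : 0 < (g q * h p - g p * h q) / N by apply: divr_gt0 => //; lra.
have Dv := cD p q s Dp Dq (andb_true_intro (conj s0 s1)).
have hv : 0 < h (s *: p + (1 - s) *: q).
  apply: lt_le_trans (ch p q s Dp Dq (andb_true_intro (conj s0 s1))).
  suff -> : s * h p + (1 - s) * h q = (g q * h p - g p * h q) / N by [].
  rewrite e1 /s; field => //.
have gv : 0 < g (s *: p + (1 - s) *: q).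
  apply: lt_le_trans (cg p q s Dp Dq (andb_true_intro (conj s0 s1))).
  suff -> : s * g p + (1 - s) * g q = (g q * h p - g p * h q) / N by [].
  rewrite e1 /s; field => //.
by case: (H _ Dv); rewrite leNgt ?hv ?gv.
Qed.

Lemma frac_le (a b c d : R) : 0 < b -> 0 < d -> a * d <= c * b -> a / b <= c / d.
Proof. by move=> b0 d0 h; rewrite ler_pdivrMr // mulrAC ler_pdivlMr. Qed.

Lemma two D h g : cvx D -> ccv D h -> ccv D g ->
  (forall u, D u -> h u <= 0 \/ g u <= 0) ->
  exists al, [/\ 0 <= al, al <= 1 & forall u, D u -> al * h u + (1 - al) * g u <= 0].
Proof.
move=> cD ch cg H.
case: (pselect (exists q, D q /\ 0 < g q)) => [[q0 [Dq0 gq0]]|nQ]; last first.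
  exists 0; split => // u Du; rewrite mul0r add0r subr0 mul1r.
  by rewrite leNgt; apply/negP => gu; apply: nQ; exists u.
have hQ q : D q -> 0 < g q -> h q <= 0.
  by move=> Dq gq; case: (H q Dq) => //; rewrite leNgt gq.
pose A := [set g q / (g q - h q) | q in [set q | D q /\ 0 < g q]].
have A1 : ubound A 1.
  move=> _ [q [Dq gq] <-]; have := hQ q Dq gq => hq.
  by rewrite ler_pdivrMr ?mul1r; lra.
have An : A !=set0 by exists (g q0 / (g q0 - h q0)); exists q0.
have hsA : has_sup A by split => //; exists 1.
have al0 : 0 <= sup A.
  have hq0 : g q0 / (g q0 - h q0) <= sup A.
    by apply: sup_upper_bound => //; exists q0.
  apply: le_trans hq0.
  by apply: divr_ge0; [lra | have := hQ q0 Dq0 gq0; lra].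
have al1 : sup A <= 1 by exact: ge_sup.
exists (sup A); split => // u Du.
have [gu|gu] := ltP 0 (g u).
  have hu := hQ u Du gu.
  have : g u / (g u - h u) <= sup A by apply: sup_upper_bound => //; exists u.
  rewrite ler_pdivrMr; last lra.
  move=> hh; nra.
have [hu|hu] := ltP 0 (h u); last nra.
have : sup A <= - g u / (h u - g u).
  apply: ge_sup => // _ [q [Dq gq] <-].
  have hq := hQ q Dq gq.
  apply: frac_le; [lra | lra |].
  have := key2 cD ch cg H u q Du Dq hu gq; nra.
rewrite ler_pdivlMr; last lra.
move=> hh; nra.
Qed.

Lemma sum_delta (I : finType) (k : I) (F : I -> R) :
  \sum_i (i == k)%:R * F i = F k.
Proof.
rewrite (bigD1 k) //= eqxx mul1r big1 ?addr0 // => i /negbTE ->.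
by rewrite mul0r.
Qed.

Lemma gordan (I : finType) (g : I -> E -> R) n :
  forall (S : {set I}) (D : set E), #|S| = n.+1 -> cvx D ->
  (forall i, i \in S -> ccv D (g i)) ->
  (forall u, D u -> exists2 i, i \in S & g i u <= 0) ->
  exists lam : I -> R, [/\ forall i, 0 <= lam i, forall i, i \notin S -> lam i = 0,
    \sum_i lam i = 1 & forall u, D u -> \sum_i lam i * g i u <= 0].
Proof.
elim: n => [|n IH] S D cS cD cg H.
  have /cards1P [k Sk] : #|S| == 1%N by rewrite cS.
  exists (fun i => (i == k)%:R); split.
  - by move=> i; case: (i == k).
  - by move=> i; rewrite Sk inE => /negbTE ->.
  - rewrite (eq_bigr (fun i => (i == k)%:R * 1)) ?(@sum_delta _ k (fun _ => 1)) //.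
    by move=> i _; rewrite mulr1.
  move=> u Du; rewrite sum_delta.
  by case: (H u Du) => i; rewrite Sk inE => /eqP ->.
have : (0 < #|S|)%N by rewrite cS.
case/card_gt0P => k kS.
pose S' := S :\ k.
have cS' : #|S'| = n.+1.
  by move: cS; rewrite (cardsD1 k S) kS add1n => -[].
pose D' := fun u => D u /\ 0 < g k u.
have cD' : cvx D'.
  move=> a b s [Da ga] [Db gb] s01; split; first exact: cD.
  apply: lt_le_trans (cg k kS a b s Da Db s01).
  by case/andP: s01 => s0 s1; apply: addr_gt0; apply: mulr_gt0 => //; lra.
have cg' : forall i, i \in S' -> ccv D' (g i).
  move=> i; rewrite in_setD1 => /andP[_ iS] a b s [Da _] [Db _] s01.
  exact: cg.
have H' : forall u, D' u -> exists2 i, i \in S' & g i u <= 0.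
  move=> u [Du gu]; case: (H u Du) => i iS giu; exists i => //.
  rewrite in_setD1 iS andbT; apply/eqP => ik; move: giu; rewrite ik leNgt gu.
  by [].
have [mu [mu0 muS mu1 muH]] := IH S' D' cS' cD' cg' H'.
pose h := fun u => \sum_i mu i * g i u.
have ch : ccv D h.
  move=> a b s Da Db s01; rewrite /h !mulr_sumr -big_split /=.
  apply: ler_sum => i _.
  case: (boolP (i \in S')) => iS'.
    have iS : i \in S by move: iS'; rewrite in_setD1 => /andP[].
    have := cg i iS a b s Da Db s01.
    move=> hh; rewrite mulrCA [(1 - s) * _]mulrCA -mulrDr.
    by apply: ler_wpM2l.
  by rewrite muS // !mul0r !mulr0 addr0.
have H2 : forall u, D u -> h u <= 0 \/ g k u <= 0.
  move=> u Du; have [gu|gu] := ltP 0 (g k u); last by right.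
  by left; apply: muH.
have [al [al0 al1 alH]] := two cD ch (cg k kS) H2.
exists (fun i => al * mu i + (1 - al) * (i == k)%:R); split.
- move=> i; apply: addr_ge0; apply: mulr_ge0 => //; (try lra); by case: (i == k).
- move=> i iS.
  have iS' : i \notin S' by rewrite in_setD1 negb_and iS orbT.
  rewrite muS // mulr0 add0r.
  have -> : (i == k) = false by apply/negbTE; apply: contraNneq iS => ->.
  by rewrite mulr0.
- rewrite big_split /= -!mulr_sumr mu1.
  have -> : \sum_i ((i == k)%:R : R) = 1.
    rewrite (eq_bigr (fun i => (i == k)%:R * 1)) ?(@sum_delta _ k (fun _ => 1)) //.
    by move=> i _; rewrite mulr1.
  by rewrite mulr1 mulr1 addrC subrK.
move=> u Du.
have -> : \sum_i (al * mu i + (1 - al) * (i == k)%:R) * g i u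
    = al * h u + (1 - al) * g k u.
  have sd : \sum_i (i == k)%:R * ((1 - al) * g i u) = (1 - al) * g k u.
    exact: (@sum_delta _ k (fun i => (1 - al) * g i u)).
  rewrite /h mulr_sumr -sd -big_split /=.
  by apply: eq_bigr => i _; ring.
exact: alH.
Qed.
End Gordan.
Lemma inf_le (R : realType) (S : set \bar R) y : S y -> (ereal_inf S <= y)%E.
Proof. exact: ereal_inf_lbound. Qed.
Lemma le_sup (R : realType) (S : set \bar R) y : S y -> (y <= ereal_sup S)%E.
Proof. exact: ereal_sup_ubound. Qed.
Section Dini.
Variables (R : realType) (E : topologicalLmodType R) (f : E -> R) (x : E).

Local Notation D := (lower_dini f x).

Lemma dini0 : D 0 = 0%E.
Proof.
rewrite /lower_dini; apply/eqP; rewrite eq_le; apply/andP; split.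
  apply: ge_ereal_sup => _ [d d0 <-].
  have d0' : 0 < d by move: d0; rewrite /= in_itv /= andbT.
  apply: le_trans (@inf_le _ _ ((f (x + (d/2) *: 0) - f x) / (d / 2))%:E _) _.
    exists (d/2) => //; rewrite /= in_itv /=; apply/andP; split; lra.
  by rewrite scaler0 addr0 subrr mul0r.
apply: le_trans _ (@le_sup _ _ (ereal_inf [set ((f (x + t *: 0) - f x) / t)%:E | t in `]0, 1[ ]) _); last first.
  by exists 1 => //; rewrite /= in_itv /= andbT.
apply: le_ereal_inf_tmp => _ [t _ <-].
by rewrite scaler0 addr0 subrr mul0r.
Qed.

Lemma dini_scale_ge s v : 0 < s -> D v \is a fin_num -> D (s *: v) \is a fin_num ->
  s * fine (D v) <= fine (D (s *: v)).
Proof.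
move=> s0 fv fsv.
set c := fine (D (s *: v)).
have Dsv : D (s *: v) = c%:E by rewrite /c fineK.
suff : (D v <= (c / s)%:E)%E.
  by rewrite -(fineK fv) lee_fin ler_pdivlMr // mulrC.
rewrite /lower_dini; apply: ge_ereal_sup => _ [d d0 <-].
have d0' : 0 < d by move: d0; rewrite /= in_itv /= andbT.
set I := ereal_inf _.
have hI : forall t, 0 < t < d -> (I <= ((f (x + t *: v) - f x) / t)%:E)%E.
  by move=> t td; apply: inf_le; exists t => //; rewrite /= in_itv /=.
move: I hI => [r0| |] hI.
- have hr : forall t, 0 < t < d -> r0 <= (f (x + t *: v) - f x) / t.
    by move=> t td; rewrite -lee_fin; exact: hI.
  suff : ((r0 * s)%:E <= c%:E)%E by rewrite !lee_fin ler_pdivlMr.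
  rewrite -Dsv /lower_dini.
  apply: le_trans _ (@le_sup _ _ (ereal_inf [set ((f (x + t *: (s *: v)) - f x) / t)%:E | t in `]0, d / s[ ]) _); last first.
    by exists (d / s) => //; rewrite /= in_itv /= andbT divr_gt0.
  apply: le_ereal_inf_tmp => _ [t t0 <-]; rewrite lee_fin.
  move: t0; rewrite /= in_itv /= => /andP[t0 td].
  have := hr (t * s); rewrite mulr_gt0 //= -ltr_pdivlMr // td => /(_ isT).
  rewrite scalerA => h.
  have -> : (f (x + (t * s) *: v) - f x) / t = s * ((f (x + (t * s) *: v) - f x) / (t * s)).
    by field; rewrite gt_eqF // gt_eqF.
  rewrite mulrC ler_pM2l // ; move: h; by rewrite mulrC.
- have h2 : 0 < d / 2 < d by apply/andP; split; lra.
  by have := hI _ h2; rewrite leye_eq.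
- by rewrite leNye.
Qed.

Lemma dini_scale s v : 0 < s -> (forall w, D w \is a fin_num) ->
  fine (D (s *: v)) = s * fine (D v).
Proof.
move=> s0 hf; apply/eqP; rewrite eq_le; apply/andP; split; last exact: dini_scale_ge.
have h := @dini_scale_ge s^-1 (s *: v).
rewrite invr_gt0 scalerA mulVf ?gt_eqF // scale1r in h.
move: (h s0 (hf _) (hf _)).
by rewrite ler_pdivrMl // => h; rewrite mulrC.
Qed.

Hypothesis hf : DM_differentiable f x.
Let dd v := fine (D v).
Let gg u := fine (mod_lower_dini f x u).

Lemma gle u w : gg u <= dd (u + w) - dd w.
Proof.
rewrite -lee_fin /gg fineK; last by case: (hf u).
rewrite /mod_lower_dini.
apply: le_trans (@inf_le _ _ (D (u + w)%R - D w)%E _) _; first by exists w.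
by rewrite /dd EFinB !fineK //; [case: (hf w) | case: (hf (u + w))].
Qed.

Lemma gge u c : (forall w, c <= dd (u + w) - dd w) -> c <= gg u.
Proof.
move=> h; rewrite -lee_fin /gg fineK; last by case: (hf u).
rewrite /mod_lower_dini; apply: le_ereal_inf_tmp => _ [w _ <-].
by rewrite -(fineK (proj2 (hf w))) -(fineK (proj2 (hf (u + w)))) -EFinB lee_fin; exact: h.
Qed.

Lemma dd0 : dd 0 = 0.
Proof. by rewrite /dd dini0. Qed.

Lemma gg_le_dd u : gg u <= dd u.
Proof. by have := gle u 0; rewrite addr0 dd0 subr0. Qed.

Lemma gg_superadd u v : gg u + gg v <= gg (u + v).
Proof.
apply: gge => w.
have h1 := gle u (v + w); have h2 := gle v w.
rewrite addrA in h1; lra.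
Qed.

Lemma gg_hom s a : 0 < s -> s * gg a <= gg (s *: a).
Proof.
move=> s0; apply: gge => w.
have hw : w = s *: (s^-1 *: w) by rewrite scalerA mulfV ?gt_eqF // scale1r.
have hfD : forall v, D v \is a fin_num by move=> v; case: (hf v).
rewrite [in X in _ <= X]hw -scalerDr /dd; set w' := s^-1 *: w.
rewrite [fine (D (s *: (a + w')))]dini_scale // [fine (D (s *: w'))]dini_scale // -mulrBr ler_pM2l //; exact: gle.
Qed.

Lemma gg_ccv : @ccv R E setT gg.
Proof.
move=> a b s _ _ /andP[s0 s1].
apply: le_trans (gg_superadd _ _).
by apply: lerD; apply: gg_hom; lra.
Qed.

Lemma gg_pos u : 0 < gg u -> \forall t \near 0^'+, f x < f (x + t *: u).
Proof.
move=> gu.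
have du : (0 < D u)%E.
  by rewrite -(fineK (proj2 (hf u))) lte_fin; apply: lt_le_trans gu (gg_le_dd u).
have [_ [d d0 <-] Id] := ereal_sup_gt du.
have d0' : 0 < d by move: d0; rewrite /= in_itv /= andbT.
near=> t.
have t0 : 0 < t by near: t; exact: nbhs_right_gt.
have td : t < d by near: t; exact: nbhs_right_lt.
have : (0 < ((f (x + t *: u) - f x) / t)%:E)%E.
  apply: lt_le_trans Id _; apply: inf_le; exists t => //.
  by rewrite /= in_itv /= t0 td.
rewrite lte_fin => h.
have : 0 < (f (x + t *: u) - f x) / t * t by rewrite mulr_gt0.
rewrite divfK ?gt_eqF //; lra.
Unshelve. all: by end_near.
Qed.

End Dini.

Lemma hcont (R : realType) (E : topologicalLmodType R) (x u : E) :
  (fun t : R => x + t *: u) @ 0^'+ --> x.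
Proof.
have hs : (fun t : R => (t : R^o) *: u) @ (0:R) --> (0:R^o) *: u.
  apply: (@continuous2_cvg R R^o E E _ _ (fun t : R => (t : R^o)) (fun _ => u) (fun a b => a *: b)).
  - exact: (@scale_continuous R E ((0:R^o), u)).
  - exact: cvg_id.
  - exact: cvg_cst.
have ha : (fun t : R => x + t *: u) @ (0:R) --> x + 0 *: u.
  apply: (@continuous2_cvg R E E E _ _ (fun _ => x) (fun t : R => t *: u) (fun a b => a + b)).
  - exact: (@add_continuous E (x, 0 *: u)).
  - exact: cvg_cst.
  - exact: hs.
rewrite scale0r addr0 in ha.
apply: cvg_trans ha; apply: cvg_app; exact: cvg_within.
Qed.

Unset Implicit Arguments.

Theorem theorem1p1 (R : realType) (E : topologicalLmodType R) (Om : set E)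
    (m : nat) (f0 : E -> R) (f : 'I_m -> E -> R) (xhat : E) :
  Om !=set0 -> open Om ->
  solves_P1 Om f0 f xhat ->
  (forall j, 0 < f j xhat -> lsc_at (f j) xhat) ->
  DM_differentiable f0 xhat ->
  (forall i, DM_differentiable (f i) xhat) ->
  (exists (lam0 : R) (lam : 'I_m -> R),
     [/\ 0 <= lam0, (forall i, 0 <= lam i),
         (lam0 != 0 \/ exists i, lam i != 0),
         (forall i, lam i * f i xhat = 0) &
         forall u : E,
           ((lam0%:E * mod_lower_dini f0 xhat u
             + \sum_(i < m) (lam i)%:E * mod_lower_dini (f i) xhat u) <= 0)%E])
  /\
  ((exists w : E, forall i, f i xhat = 0 -> (0 < mod_lower_dini (f i) xhat w)%E) ->
   exists lam : 'I_m -> R,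
     [/\ (forall i, 0 <= lam i),
         (forall i, lam i * f i xhat = 0) &
         forall u : E,
           ((mod_lower_dini f0 xhat u
             + \sum_(i < m) (lam i)%:E * mod_lower_dini (f i) xhat u) <= 0)%E]).
Proof.
move=> Om0 oOm [Omx fx0 opt] lsc hf0 hf.
pose F : 'I_m.+1 -> E -> R := fun i => if unlift ord0 i is Some j then f j else f0.
have Fl : forall j, F (lift ord0 j) = f j by move=> j; rewrite /F /= ?liftK.
have F0 : F ord0 = f0 by rewrite /F /= ?unlift_none.
have hF : forall i, DM_differentiable (F i) xhat by move=> i; rewrite /F; case: unlift.
pose g i u := fine (mod_lower_dini (F i) xhat u).
have Mi : forall i u, mod_lower_dini (F i) xhat u = (g i u)%:E.
  by move=> i u; rewrite /g fineK //; case: (hF i u).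
pose S := [set i : 'I_m.+1 | if unlift ord0 i is Some j then f j xhat == 0 else true]%SET.
have S0 : ord0 \in S by rewrite inE /= ?unlift_none.
have cS : #|S| = (#|S|.-1).+1.
  by rewrite prednK // card_gt0; apply/set0Pn; exists ord0.
have Hnot : forall u, [set: E] u -> exists2 i, i \in S & g i u <= 0.
  move=> u _; apply: contrapT => nH.
  have pos : forall i, i \in S -> 0 < g i u.
    by move=> i iS; rewrite ltNge; apply/negP => h; apply: nH; exists i.
  have hc := @hcont R E xhat u.
  have P1 : \forall t \near 0^'+, Om (xhat + t *: u).
    by apply: hc; apply: open_nbhs_nbhs; split.
  have P2 : \forall t \near 0^'+, f0 xhat < f0 (xhat + t *: u).
    by have := gg_pos (hF ord0) u (pos _ S0); rewrite F0.
  have P3 : \forall t \near 0^'+, forall j, 0 <= f j (xhat + t *: u).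
    apply: filter_forall => j.
    have [fj|fj] := ltP 0 (f j xhat).
      have h : \forall t \near 0^'+, f j xhat - f j xhat < f j (xhat + t *: u).
        exact: (hc _ (lsc j fj (f j xhat) fj)).
      by apply: filterS h => t; rewrite subrr => /ltW.
    have fj0 : f j xhat = 0 by apply/le_anti; rewrite fj fx0.
    have jS : lift ord0 j \in S by rewrite inE liftK fj0.
    have := gg_pos (hF (lift ord0 j)) u (pos _ jS); rewrite Fl.
    by apply: filterS => t; rewrite fj0 => /ltW.
  have [t [[Omt Ct] Ft]] := filter_ex (filterI (filterI P1 P3) P2).
  by have := opt _ Omt Ct; rewrite leNgt Ft.
have cvxT : @cvx R E setT by [].
have ccvs : forall i, i \in S -> @ccv R E setT (g i).
  by move=> i _; exact: (gg_ccv (hF i)).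
have [lam [lam0 lamS lam1 lamH]] := gordan g cS cvxT ccvs Hnot.
have conv : forall (l0 : R) (l : 'I_m -> R) u,
    (l0%:E * mod_lower_dini f0 xhat u
      + \sum_(i < m) (l i)%:E * mod_lower_dini (f i) xhat u)%E
    = (l0 * g ord0 u + \sum_(j < m) l j * g (lift ord0 j) u)%:E.
  move=> l0 l u; rewrite -F0 Mi -EFinM.
  under eq_bigr => j _ do rewrite -Fl Mi -EFinM.
  by rewrite sumEFin -EFinD.
split.
  exists (lam ord0), (fun j => lam (lift ord0 j)); split => //.
  - case: (eqVneq (lam ord0) 0) => [l0|]; last by left.
    right; apply: contrapT => nE.
    have : \sum_i lam i = 0.
      rewrite big_ord_recl l0 add0r big1 // => j _.
      apply/eqP; rewrite -[_ == 0]negbK; apply/negP => h; apply: nE; by exists j.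
    by rewrite lam1 => /eqP; rewrite oner_eq0.
  - move=> j; case: (eqVneq (f j xhat) 0) => [->|fj]; first by rewrite mulr0.
    by rewrite lamS ?mul0r // inE liftK.
  - move=> u; rewrite conv lee_fin.
    by have := lamH u Logic.I; rewrite big_ord_recl.
move=> [w hw].
have glt : forall j, lift ord0 j \in S -> 0 < g (lift ord0 j) w.
  move=> j; rewrite inE liftK => /eqP fj.
  by have := hw j fj; rewrite -Fl Mi lte_fin.
have lam0pos : 0 < lam ord0.
  rewrite lt_neqAle lam0 andbT eq_sym; apply/negP => /eqP l0.
  have hpos : forall i, 0 <= lam i * g i w.
    move=> i; case: (boolP (i \in S)) => iS; last by rewrite lamS ?mul0r.
    case: (unliftP ord0 i) => [j ej|ei]; last by rewrite ei l0 mul0r.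
    by rewrite ej; apply: mulr_ge0 => //; apply: ltW; apply: glt; rewrite -ej.
  have h0 : \sum_i lam i * g i w = 0.
    by apply/le_anti; rewrite lamH //= sumr_ge0.
  have hz := psumr_eq0P (fun i _ => hpos i) h0.
  have : \sum_i lam i = 0.
    apply: big1 => i _.
    case: (boolP (i \in S)) => iS; last by rewrite lamS.
    case: (unliftP ord0 i) => [j ej|ei]; last by rewrite ei.
    have := hz i isT; move/eqP; rewrite mulf_eq0 => /orP[/eqP //|].
    by rewrite ej gt_eqF //; apply: glt; rewrite -ej.
  by rewrite lam1 => /eqP; rewrite oner_eq0.
exists (fun j => lam (lift ord0 j) / lam ord0); split.
- by move=> j; apply: divr_ge0.
- move=> j; case: (eqVneq (f j xhat) 0) => [->|fj]; first by rewrite mulr0.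
  by rewrite lamS ?mul0r // inE liftK.
move=> u.
have := conv 1 (fun j => lam (lift ord0 j) / lam ord0) u.
rewrite mul1e => ->; rewrite lee_fin mul1r.
have := lamH u Logic.I; rewrite big_ord_recl => h.
suff : lam ord0 * (g ord0 u + \sum_(j < m) lam (lift ord0 j) / lam ord0 * g (lift ord0 j) u) <= 0.
  by rewrite pmulr_rle0.
rewrite mulrDr mulr_sumr.
rewrite (eq_bigr (fun j => lam (lift ord0 j) * g (lift ord0 j) u)) //.
by move=> j _; field; rewrite gt_eqF.
Qed.
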